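(* Let $F$ be a field of characteristic $0$, $n\ge 1$, $i=\lfloor n/2\rfloor$, $j=\lfloor (n-1)/2\rfloor$. Let $f=p_{2a_1+1}\cdots p_{2a_{i+1}+1}$ be a long product, i.e. $a_1,\dots,a_{i+1}>j$. Suppose $f=\alpha_1g_1+\dots+\alpha_mg_m$ with $\alpha_\ell\in F$ and $g_1,\dots,g_m$ pairwise distinct proper products. Then every $g_\ell=p_1^{c_1}p_3^{c_3}\cdots p_{2j+1}^{c_{2j+1}}p_{2b_1+1}\cdots p_{2b_{i'}+1}$ with $\alpha_\ell\neq 0$ has at least one of $c_1,c_3,\dots,c_{2j+1}$ positive.
   Context: $p_k=x_1^k+\dots+x_n^k$. A proper product is a polynomial $p_1^{c_1}p_3^{c_3}\cdots p_{2j+1}^{c_{2j+1}}p_{2b_1+1}\cdots p_{2b_{i'}+1}$ with integers $c_1,\dots,c_{2j+1}\ge 0$, $0\le i'\le i$, and integers $b_k>j$ (a multiset); distinct means distinct exponent data. *)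

(* Defs.v *)
From HB Require Import structures.
From mathcomp Require Import all_boot all_order all_algebra.
From mathcomp Require Import mpoly.
Set Implicit Arguments. Unset Strict Implicit. Unset Printing Implicit Defensive.
Import GRing.Theory.
Local Open Scope ring_scope.

Definition psum (F : fieldType) (n d : nat) : {mpoly F[n]} :=
  \sum_(k < n) 'X_k ^+ d.

(* Exponent data of a proper product: (c, bs) where c = [c_1; c_3; ...; c_{2j+1}]
   (c`_k is the exponent of p_{2k+1}) and bs is the multiset {b_1,...,b_{i'}},
   represented canonically as a sorted list. *)
Definition proper_data (n : nat) (d : seq nat * seq nat) : bool :=
  [&& size d.1 == (n.-1)./2 .+1,
      sorted leq d.2,
      all (fun b => (n.-1)./2 < b) d.2 &
      size d.2 <= n./2]%N.

Definition proper_eval (F : fieldType) (n : nat) (d : seq nat * seq nat) : {mpoly F[n]} :=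
  (\prod_(k < size d.1) psum F n (2 * k + 1) ^+ (nth 0%N d.1 k)) *
  \prod_(b <- d.2) psum F n (2 * b + 1).

Definition long_prod (F : fieldType) (n : nat) (a : seq nat) : {mpoly F[n]} :=
  \prod_(x <- a) psum F n (2 * x + 1).

(* Main.v *)
Require Import Defs.
From HB Require Import structures.
From mathcomp Require Import all_boot all_order all_algebra.
From mathcomp Require Import mpoly.
From mathcomp Require Import ring.
Import GRing.Theory.
Local Open Scope ring_scope.

Section PolyAux.
Variable F : fieldType.

Lemma linM (a b : F) (Q : {poly F}) :
  ((a%:P + b%:P * 'X) * Q)`_0 = a * Q`_0 /\
  ((a%:P + b%:P * 'X) * Q)`_1 = a * Q`_1 + b * Q`_0.
Proof. rewrite mulrDl -mulrA !coefD !coefCM !coefXM /=; by split=> //; rewrite mulr0 addr0. Qed.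

Lemma linX (a b : F) d :
  ((a%:P + b%:P * 'X) ^+ d)`_0 = a ^+ d /\
  ((a%:P + b%:P * 'X) ^+ d)`_1 = d%:R * a ^+ d.-1 * b.
Proof.
elim: d => [|d [IH0 IH1]]; first by rewrite expr0 !coef1 /= !mul0r; split.
have [h0 h1] := linM a b ((a%:P + b%:P * 'X) ^+ d).
rewrite exprS h0 h1 IH0 IH1 exprS; split=> //.
case: d {IH0 IH1 h0 h1} => [|d] /=; first by rewrite expr0; ring.
rewrite exprS; ring.
Qed.

Fixpoint Dl (R : comRingType) (a b : nat -> R) (K : seq nat) : R :=
  if K is k :: K' then a k * Dl R a b K' + b k * \prod_(k' <- K') a k' else 0.
Arguments Dl {R}.

Lemma coef_prod_lin (a b : nat -> F) K :
  (\prod_(k <- K) ((a k)%:P + (b k)%:P * 'X))`_0 = \prod_(k <- K) a k /\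
  (\prod_(k <- K) ((a k)%:P + (b k)%:P * 'X))`_1 = Dl a b K.
Proof.
elim: K => [|k K [IH0 IH1]]; first by rewrite !big_nil !coef1; split.
have [h0 h1] := linM (a k) (b k) (\prod_(k <- K) ((a k)%:P + (b k)%:P * 'X)).
by rewrite !big_cons h0 h1 IH0 IH1; split.
Qed.

Lemma Dl_horner (a c : nat -> F) K x :
  (Dl (fun k => (a k)%:P) (fun k => (c k)%:P * 'X^(2*k)) K).[x] =
  Dl a (fun k => c k * x ^+ (2*k)) K.
Proof.
elim: K => [|k K IH] /=; first by rewrite horner0.
rewrite hornerD !hornerM IH hornerC hornerXn horner_prod hornerC; congr (_ + _); congr (_ * _); apply: eq_bigr => i _; rewrite hornerC.
by []. Qed.

Lemma Dl_coef (a c : nat -> F) K k :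
  (Dl (fun k => (a k)%:P) (fun k => (c k)%:P * 'X^(2*k)) K)`_(2*k) =
  c k * (count_mem k K)%:R * \prod_(k' <- rem k K) a k'.
Proof.
elim: K => [|k0 K IH] /=; first by rewrite coef0 mulr0 mul0r.
rewrite coefD coefCM IH -rmorph_prod -[(c k0)%:P * _ * _]mulrA coefCM coefXnM coefC.
case: (eqVneq k0 k) => [->|ne].
  rewrite ltnn subnn eqxx /= natrD.
  have [kK|kK] := boolP (k \in K).
    rewrite !(perm_big _ (perm_to_rem kK)) !big_cons /=. ring.
  rewrite (count_memPn kK) mulr0 mul0r mulr0 add0r.
  by rewrite addr0 mulr1.
rewrite /= big_cons.
have -> : (if (2 * k < 2 * k0)%N then 0 else (if (2 * k - 2 * k0 == 0)%N then \prod_(j <- K) a j else 0)) = 0.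
  case: ifP => // h1; case: ifP => // /eqP h2.
  have h3 : (2 * k <= 2 * k0)%N by rewrite -subn_eq0 h2.
  have h4 : (2 * k == 2 * k0)%N by rewrite eqn_leq h3 leqNgt h1.
  by move: h4; rewrite eqn_mul2l /= eq_sym (negbTE ne).
rewrite mulr0 addr0. ring.
Qed.

Lemma poly_all0 (hF : [pchar F] =i pred0) (p : {poly F}) :
  (forall x, p.[x] = 0) -> p = 0.
Proof.
move=> h; apply/eqP; apply/negPn/negP => nz.
pose rs : seq F := [seq j%:R | j <- iota 0 (size p)].
have H1 : all (root p) rs by apply/allP => x /mapP [j _ ->]; apply/rootP.
have Hc := pcharf0P F; have H := (proj1 Hc) hF.
have H2 : uniq rs.
  rewrite map_inj_uniq ?iota_uniq // => i j /eqP; rewrite -subr_eq0 => E.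
  case: (ltngtP i j) E => // lt.
    by rewrite -opprB -natrB ?(ltnW lt) // oppr_eq0 H subn_eq0 leqNgt lt.
  by rewrite -natrB ?(ltnW lt) // H subn_eq0 leqNgt lt.
by have := max_poly_roots nz H1 H2; rewrite size_map size_iota ltnn.
Qed.


Definition Lf N k (u s : nat -> F) : F :=
  (2*k+1)%:R * \sum_(l < N) u l ^+ (2*k) * s l.

Lemma FI (hF : [pchar F] =i pred0) r : forall (I : finType) (P : pred I)
  (be : I -> F) (K : I -> seq nat),
  (forall l, P l -> size (K l) = r) ->
  (forall u s, \sum_(l | P l) be l * \prod_(k <- K l) Lf r k u s = 0) ->
  forall M, \sum_(l | P l && perm_eq (K l) M) be l = 0.
Proof.
have Hc := pcharf0P F; have Hn := (proj1 Hc) hF.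
elim: r => [|r IH] I P be K Hs H [|k M].
- rewrite -[RHS](H (fun _ => 0) (fun _ => 0)); apply: eq_big => l.
    by case Pl: (P l) => //=; move: (Hs l Pl); case: (K l).
  by move=> /andP [Pl _]; move: (Hs l Pl); case: (K l) => // _; rewrite big_nil mulr1.
- apply: big1 => l /andP [Pl pe].
  by move: (perm_size pe) (Hs l Pl) => ->.
- apply: big1 => l /andP [Pl pe].
  by move: (perm_size pe) (Hs l Pl) => ->.
pose c' := fun k' : nat => ((2*k'+1)%:R : F).
have key := IH I (fun l => P l && (k \in K l))
  (fun l => be l * (c' k * (count_mem k (K l))%:R)) (fun l => rem k (K l)).
have cnz : c' k * (count_mem k (k :: M))%:R != 0.
  by rewrite /c' -natrM Hn muln_eq0 negb_or addn1 /= eqxx.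
suff : (\sum_(l | P l && perm_eq (K l) (k :: M)) be l) * (c' k * (count_mem k (k :: M))%:R) = 0.
  by move/eqP; rewrite mulf_eq0 (negbTE cnz) orbF => /eqP.
have hs : forall l, P l && (k \in K l) -> size (rem k (K l)) = r.
  by move=> l /andP [Pl kK]; rewrite size_rem // Hs.
have ha : forall u s, \sum_(l | P l && (k \in K l)) be l * (c' k * (count_mem k (K l))%:R) *
   \prod_(k0 <- rem k (K l)) Lf r k0 u s = 0.
  move=> u s.
  pose A := fun k' => Lf r k' u s.
  have step : forall x y, \sum_(l | P l) be l *
      \prod_(k' <- K l) (A k' + c' k' * x ^+ (2*k') * y) = 0.
    move=> x y.
    pose u' := fun l => if l == r then x else u l.
    pose s' := fun l => if l == r then y else s l.
    rewrite -[RHS](H u' s'); apply: eq_bigr => l _; congr (_ * _).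
    apply: eq_bigr => k' _.
    rewrite /Lf big_ord_recr /= /u' /s' eqxx mulrDr; congr (_ + _); last first.
      by rewrite /c' mulrA.
    rewrite /A /Lf; congr (_ * _); apply: eq_bigr => i _.
    by rewrite /= (ltn_eqF (ltn_ord i)).
  have stepx : forall x, \sum_(l | P l) be l *
      Dl A (fun k' => c' k' * x ^+ (2*k')) (K l) = 0.
    move=> x.
    pose PY := \sum_(l | P l) be l *: \prod_(k' <- K l)
       ((A k')%:P + (c' k' * x ^+ (2*k'))%:P * 'X).
    have PY0 : PY = 0.
      apply: (poly_all0 hF) => y.
      rewrite horner_sum -[RHS](step x y); apply: eq_bigr => l _.
      rewrite hornerZ horner_prod; congr (_ * _); apply: eq_bigr => k' _.
      by rewrite hornerD hornerM !hornerC hornerX.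
    have := congr1 (fun p : {poly F} => p`_1) PY0.
    rewrite /= coef0 coef_sum => E; rewrite -[RHS]E; apply: eq_bigr => l _.
    by rewrite coefZ (proj2 (coef_prod_lin _ _ _)).
  pose PX := \sum_(l | P l) be l *:
     Dl (fun k' => (A k')%:P) (fun k' => (c' k')%:P * 'X^(2*k')) (K l).
  have PX0 : PX = 0.
    apply: (poly_all0 hF) => x.
    rewrite horner_sum -[RHS](stepx x); apply: eq_bigr => l _.
    by rewrite hornerZ Dl_horner.
  have := congr1 (fun p : {poly F} => p`_(2*k)) PX0.
  rewrite /= coef0 coef_sum => E; rewrite -[RHS]E.
  rewrite big_mkcondr /=; apply: eq_bigr => l _.
  rewrite coefZ Dl_coef.
  case: ifP => kK; first by rewrite /A -mulrA.
  by rewrite (count_memPn (negbT kK)) !mulr0 mul0r mulr0.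
rewrite mulr_suml -[RHS](key hs ha M).
apply: eq_big => l.
  case Pl: (P l) => //=.
  apply/idP/andP => [pe|[kK pe]].
    have kK : k \in K l by rewrite (perm_mem pe) mem_head.
    split=> //; rewrite -(perm_cons k); apply: perm_trans pe.
    by rewrite perm_sym perm_to_rem.
  by apply: perm_trans (perm_to_rem kK) _; rewrite perm_cons.
move=> /andP [Pl pe]; congr (_ * (_ * _%:R)).
by rewrite (permP pe).
Qed.

End PolyAux.
Arguments Lf {F}.
Arguments Dl {R}.
Section Psi.
Variable F : fieldType.
Variable n : nat.
Variables u s : nat -> F.
Let i := n./2.

Definition v0 (j : nat) : F := if (j < i)%N then u j else if (j < 2*i)%N then - u (j - i) else 0.
Definition v1 (j : nat) : F := if (j < i)%N then s j else 0.
Definition hh (j : 'I_n) : {poly F} := (v0 j)%:P + (v1 j)%:P * 'X.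
Definition psi (p : {mpoly F[n]}) : {poly F} := mmap (@polyC F) hh p.

Lemma psi_psum d : psi (psum F n d) = \sum_(j < n) hh j ^+ d.
Proof.
rewrite /psi /psum rmorph_sum; apply: eq_bigr => j _.
by rewrite rmorphXn /= mmapX mmap1U.
Qed.

Lemma oddpow (x : F) k : (- x) ^+ (2*k+1) = - x ^+ (2*k+1).
Proof. by rewrite addn1 !exprS !exprM sqrrN mulNr. Qed.

Lemma psi_odd k : (psi (psum F n (2*k+1)))`_0 = 0 /\
                  (psi (psum F n (2*k+1)))`_1 = Lf i k u s.
Proof.
rewrite psi_psum !coef_sum; split.
  under eq_bigr do rewrite (proj1 (linX _ _ _ _)).
  have hn : (2 * i <= n)%N.
    by rewrite /i -{2}(odd_double_half n) -muln2 mulnC leq_addl.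
  rewrite -(big_mkord xpredT (fun j => v0 j ^+ (2*k+1))).
  rewrite (big_cat_nat (leq0n (2 * i)) hn) /=.
  rewrite [X in _ + X]big1_seq ?addr0; last first.
    move=> j /andP [_]; rewrite mem_index_iota => /andP [h _].
    by rewrite /v0 ltnNge (leq_trans _ h) ?leq_pmull // ltnNge h /= expr0n addn1.
  have hi : (i <= 2 * i)%N by rewrite leq_pmull.
  rewrite (big_cat_nat (leq0n i) hi) /=.
  have -> : \sum_(i <= j < 2*i) v0 j ^+ (2*k+1) = \sum_(0 <= j < i) v0 (j + i) ^+ (2*k+1).
    by rewrite -{1}(add0n i) big_addn mul2n -addnn addnK.
  rewrite -big_split /= big1_seq // => j /andP [_]; rewrite mem_index_iota => /andP [_ hj].
  rewrite /v0 hj ltnNge leq_addl /=.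
  have -> : (j + i < 2*i)%N by rewrite mul2n -addnn ltn_add2r.
  by rewrite addnK oddpow subrr.
rewrite (eq_bigr (fun j : 'I_n => (2*k+1)%:R * (if (j < i)%N then u j ^+ (2*k) * s j else 0))); last first.
  move=> j _; rewrite (proj2 (linX _ _ _ _)) addn1 /= /v1 /v0.
  by case: ifP => _; rewrite ?mulr0 // mulrA.
rewrite -mulr_sumr -big_mkcond /=.
have hle : (i <= n)%N by rewrite /i -{2}(odd_double_half n) -addnn addnA leq_addl.
by rewrite /Lf (big_ord_widen n (fun j => u j ^+ (2*k) * s j) hle).
Qed.
Lemma prodQX (Q : nat -> {poly F}) (K : seq nat) :
  \prod_(k <- K) (Q k * 'X) = (\prod_(k <- K) Q k) * 'X^(size K).
Proof.
elim: K => [|k K IH]; first by rewrite !big_nil expr0 mulr1.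
rewrite !big_cons IH /= exprS; ring.
Qed.

Lemma psi_prod (K : seq nat) j : (j <= size K)%N ->
  (psi (\prod_(k <- K) psum F n (2*k+1)))`_j =
  if j == size K then \prod_(k <- K) Lf i k u s else 0.
Proof.
move=> hj.
have E : forall k, psi (psum F n (2*k+1)) = (psi (psum F n (2*k+1)) %/ 'X) * 'X.
  move=> k; apply/esym/divpK.
  have := root_factor_theorem (psi (psum F n (2*k+1))) 0.
  rewrite polyC0 subr0 => <-.
  by apply/rootP; rewrite horner_coef0 (proj1 (psi_odd k)).
rewrite /psi rmorph_prod -/psi (eq_bigr _ (fun k _ => E k)) prodQX coefMXn.
case: ltnP => h.
  by rewrite (ltn_eqF h).
have -> : j = size K by apply/eqP; rewrite eqn_leq hj h.
rewrite eqxx subnn -horner_coef0 horner_prod; apply: eq_bigr => k _.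
rewrite horner_coef0 -(proj2 (psi_odd k)) [in RHS](E k) coefMX //.
Qed.

End Psi.
Arguments psi {F n}.
Arguments psi_prod {F n}.

Definition Kd (d : seq nat * seq nat) : seq nat :=
  flatten [seq nseq (nth 0%N d.1 k) k | k <- iota 0 (size d.1)] ++ d.2.

Lemma prod_nseq (R : comRingType) (G : nat -> R) m k :
  \prod_(x <- nseq m k) G x = G k ^+ m.
Proof. by elim: m => [|m IH]; rewrite ?big_nil ?expr0 // big_cons IH exprS. Qed.

Lemma proper_eval_Kd (F : fieldType) n d :
  proper_eval F n d = \prod_(k <- Kd d) psum F n (2*k+1).
Proof.
rewrite /proper_eval /Kd big_cat big_flatten big_map /=; congr (_ * _).
rewrite -(big_mkord xpredT (fun k => psum F n (2 * k + 1) ^+ nth 0%N d.1 k)).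
by rewrite /index_iota subn0; apply: eq_bigr => k _; rewrite prod_nseq.
Qed.

Lemma count_flat (c : seq nat) x N :
  count_mem x (flatten [seq nseq (nth 0%N c k) k | k <- iota 0 N]) =
  if (x < N)%N then nth 0%N c x else 0%N.
Proof.
elim: N => [|N IH] //.
rewrite -addn1 iotaD map_cat flatten_cat count_cat IH /= cats0 count_nseq add0n.
case: (ltngtP x N) => [h|h|->] /=.
- by rewrite (gtn_eqF h) mul0n addn0 addn1 ltnS (ltnW h).
- by rewrite (ltn_eqF h) addn1 ltnS leqNgt h.
- by rewrite eqxx mul1n addn1 ltnS leqnn.
Qed.

Lemma Kd_inj n d d' : proper_data n d -> proper_data n d' ->
  perm_eq (Kd d) (Kd d') -> d = d'.
Proof.
move=> /and4P [s1 so1 al1 _] /and4P [s2 so2 al2 _] pe.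
have cnt x := permP pe (pred1 x).
have cK : forall e x, count_mem x (Kd e) =
   ((if (x < size e.1)%N then nth 0%N e.1 x else 0) + count_mem x e.2)%N.
  by move=> e x; rewrite /Kd count_cat count_flat.
have z : forall e x, all (fun b => (n.-1)./2 < b)%N e -> (x < (n.-1)./2.+1)%N ->
    count_mem x e = 0%N.
  move=> e x /allP ale hx; apply: count_memPn; apply/negP => xe.
  by have := ale x xe; rewrite ltnNge -ltnS hx.
move: s1 s2 => /eqP s1 /eqP s2.
have e1 : d.1 = d'.1.
  apply: (@eq_from_nth _ 0%N); first by rewrite s1 s2.
  move=> x hx; have := cnt x; by rewrite !cK s2 -s1 hx !(z _ x) ?addn0 // -s1.

have e2 : d.2 = d'.2.
  apply: (sorted_eq leq_trans anti_leq so1 so2).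
  rewrite /perm_eq; apply/allP => y _; apply/eqP.
  case: (ltnP y (n.-1)./2.+1) => hx.
    by rewrite !z.
  have := cnt y; rewrite !cK s1 s2 ltnNge hx /=.
  by rewrite !add0n.
by case: d d' e1 e2 {cnt pe so1 so2 al1 al2 s1 s2} => [? ?] [? ?] /= -> ->.
Qed.

Lemma Kd_size_nopos d : ~~ has (fun c => 0 < c)%N d.1 -> size (Kd d) = size d.2.
Proof.
move=> /hasPn hc; rewrite /Kd size_cat.
suff -> : [seq nseq (nth 0%N d.1 k) k | k <- iota 0 (size d.1)] =
          [seq [::] | k <- iota 0 (size d.1)].
  by elim: (iota 0 (size d.1)).
apply/eq_in_map => k; rewrite mem_iota add0n => /andP [_ hk].
have := hc _ (mem_nth 0%N hk); rewrite lt0n negbK => /eqP -> //.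
Qed.

Theorem mainTheorem10 (F : fieldType) (hF : [pchar F] =i pred0)
  (n : nat) (hn : (1 <= n)%N)
  (a : seq nat) (ha : size a = (n./2).+1)
  (haj : all (fun x => (n.-1)./2 < x)%N a)
  (m : nat) (alpha : 'I_m -> F) (g : 'I_m -> seq nat * seq nat)
  (hg : forall l, proper_data n (g l))
  (hdist : injective g)
  (hf : long_prod F n a = \sum_(l < m) alpha l *: proper_eval F n (g l)) :
  forall l : 'I_m, alpha l != 0 -> has (fun c => 0 < c)%N (g l).1.
Proof.
move=> l0 al0; apply/negPn/negP => hnp.
pose K := fun l => Kd (g l).
have sz0 : (size (K l0) <= n./2)%N.
  by rewrite /K Kd_size_nopos //; case/and4P: (hg l0).
have ex : exists r, [exists l, (alpha l != 0) && (size (K l) == r)].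
  by exists (size (K l0)); apply/existsP; exists l0; rewrite al0 eqxx.
case: (ex_minnP ex) => r0 /existsP [l1 /andP [al1 /eqP sz1]] minr.
have minr' : forall l, alpha l != 0 -> (r0 <= size (K l))%N.
  by move=> l al; apply: minr; apply/existsP; exists l; rewrite al eqxx.
have r0le : (r0 <= n./2)%N by apply: leq_trans (minr' _ al0) sz0.
have EQ : forall u s, \sum_(l | size (K l) == r0) alpha l *
    \prod_(k <- K l) Lf (n./2) k u s = 0.
  move=> u s.
  have := congr1 (fun p => (psi u s p)`_r0) hf.
  rewrite /= /long_prod psi_prod; last by rewrite ha ltnW.
  rewrite ha (ltn_eqF (leq_ltn_trans r0le (ltnSn _))) => E.
  rewrite [RHS]E /psi raddf_sum coef_sum /= [LHS]big_mkcond /=.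
  apply: eq_bigr => l _.
  rewrite mmapZ coefCM -/(psi u s _) proper_eval_Kd -/(K l).
  case: (leqP r0 (size (K l))) => h.
    by rewrite psi_prod // eq_sym; case: eqP => _; rewrite ?mulr0.
  have al : alpha l = 0.
    by apply/eqP; apply: contraTT h => /minr'; rewrite -leqNgt.
  by rewrite al !mul0r; case: ifP.
have H2 : forall u s, \sum_(l | size (K l) == r0) alpha l *
    \prod_(k <- K l) Lf r0 k u s = 0.
  move=> u s.
  pose s' := fun j : nat => if (j < r0)%N then s j else (0 : F).
  rewrite -[RHS](EQ u s'); apply: eq_bigr => l _; congr (_ * _).
  apply: eq_bigr => k _; rewrite /Lf; congr (_ * _).
  rewrite (big_ord_widen (n./2) (fun j => u j ^+ (2*k) * s j) r0le) big_mkcond.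
  by apply: eq_bigr => j _; rewrite /s'; case: ifP; rewrite ?mulr0.
have := @FI F hF r0 _ (fun l => size (K l) == r0) alpha K (fun l => @eqP _ _ _) H2 (K l1).
rewrite (bigD1 l1) /=; last by rewrite sz1 eqxx perm_refl.
rewrite big1 ?addr0; last first.
  move=> l /andP [/andP [_ pe] ne].
  by move: ne; rewrite (hdist _ _ (@Kd_inj n _ _ (hg l) (hg l1) pe)) eqxx.
by move=> /eqP; rewrite (negbTE al1).
Qed.
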